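(* The class of unital equivariantly supported reflexive based quantal frames satisfying the inverse law can be identified with the class of inverse quantal frames. Precisely: if $Q$ is an equivariantly supported reflexive based quantal frame (with base locale $A$, support $\varsigma$ and $\upsilon:Q\to A$) which has a multiplicative unit $e$ and satisfies the inverse law, then $Q$, as a unital involutive quantale, is an inverse quantal frame; and conversely every inverse quantal frame $Q$, regarded as a based quantal frame over $A={\downarrow}e$ with actions given by multiplication, support $\varsigma(q)=q1_Q\wedge e$ and $\upsilon(q)=q\wedge e$, is an equivariantly supported reflexive based quantal frame satisfying the inverse law.
   Context: For a locale $A$, an $A$-$A$-bimodule is a sup-lattice $M$ with actions $a\triangleright m$, $m\triangleleft a$ preserving joins in each variable, with $1_A\triangleright m=m$, $(a\wedge b)\triangleright m=a\triangleright(b\triangleright m)$, $m\triangleleft1_A=m$, $m\triangleleft(a\wedge b)=(m\triangleleft a)\triangleleft b$, $(a\triangleright m)\triangleleft b=a\triangleright(m\triangleleft b)$. An $A$-$A$-quantale is such a $Q$ with associative join-preserving multiplication and $(a\triangleright x)y=a\triangleright(xy)$, $(x\triangleleft a)y=x(a\triangleright y)$, $(xy)\triangleleft a=x(y\triangleleft a)$; involutive if there is a join-preserving $x\mapsto x^*$ with $x^{**}=x$, $(xy)^*=y^*x^*$, $(a\triangleright(x\triangleleft b))^*=b\triangleright(x^*\triangleleft a)$. $1_Q$ is the top. A support is a join-preserving $\varsigma:Q\to A$ with $\varsigma(1_Q)=1_A$, $\varsigma(x)\triangleright y\le xx^*y$, $\varsigma(x)\triangleright x=x$; equivariant if $\varsigma(a\triangleright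 x)=a\wedge\varsigma(x)$. A based quantal frame is an involutive $A$-$A$-quantale which is a frame with $(a\triangleright x)\wedge y=a\triangleright(x\wedge y)$, $(x\triangleleft a)\wedge y=(x\wedge y)\triangleleft a$; reflexive: a frame homomorphism $\upsilon:Q\to A$ with $\upsilon(a\triangleright1_Q)=a=\upsilon(1_Q\triangleleft a)$. Inverse law: $\upsilon(a)\triangleright1_Q=\bigvee_{xy^*\le a}x\wedge y$ for all $a\in Q$. An inverse quantal frame is a unital involutive quantale $Q$ (unit $e$) whose lattice is a frame, with a stable unital support, i.e. a join-preserving $\varsigma:Q\to Q$ with $\varsigma(x)\le e$, $\varsigma(x)\le xx^*$, $x\le\varsigma(x)x$ and $\varsigma(xy)=\varsigma(x\varsigma(y))$, such that $\bigvee\{s\in Q\mid ss^*\vee s^*s\le e\}=1_Q$. *)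

(* Defs.v *)
From Stdlib Require Import ProofIrrelevance.

Set Implicit Arguments.

Record suplat := SupLat {
  car :> Type;
  le : car -> car -> Prop;
  sup : (car -> Prop) -> car;
  le_refl : forall x, le x x;
  le_trans : forall x y z, le x y -> le y z -> le x z;
  le_anti : forall x y, le x y -> le y x -> x = y;
  sup_ub : forall (S : car -> Prop) x, S x -> le x (sup S);
  sup_least : forall (S : car -> Prop) y, (forall x, S x -> le x y) -> le (sup S) y
}.
Arguments le {s}.
Arguments sup {s}.
Arguments le_anti {s x y}.

Section Ops.
Variable L : suplat.
Definition top : L := sup (fun _ => True).
Definition meet (x y : L) : L := sup (fun z => le z x /\ le z y).
Definition join (x y : L) : L := sup (fun z => z = x \/ z = y).
Definition is_frame : Prop :=
  forall (x : L) (S : L -> Prop),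
    meet x (sup S) = sup (fun y => exists s, S s /\ y = meet x s).

Lemma meet_lb_r (x y : L) : le (meet x y) y.
Proof. apply sup_least. intros z [_ H]. exact H. Qed.
End Ops.
Arguments top {L}.
Arguments meet {L}.
Arguments join {L}.

Definition join_pres (L M : suplat) (f : L -> M) : Prop :=
  forall S : L -> Prop, f (sup S) = sup (fun y => exists x, S x /\ y = f x).

Arguments join_pres {L M}.
Definition frame_hom (L M : suplat) (f : L -> M) : Prop :=
  join_pres f /\ f top = top /\ forall x y, f (meet x y) = meet (f x) (f y).

Section Based.
Variables (A M : suplat) (lact : A -> M -> M) (ract : M -> A -> M).

Definition is_bimodule : Prop :=
  (forall a, join_pres (lact a)) /\ (forall m, join_pres (fun a => lact a m)) /\
  (forall a, join_pres (fun m => ract m a)) /\ (forall m, join_pres (ract m)) /\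
  (forall m, lact top m = m) /\
  (forall a b m, lact (meet a b) m = lact a (lact b m)) /\
  (forall m, ract m top = m) /\
  (forall a b m, ract m (meet a b) = ract (ract m a) b) /\
  (forall a b m, ract (lact a m) b = lact a (ract m b)).

Variable mul : M -> M -> M.

Definition is_AA_quantale : Prop :=
  is_bimodule /\
  (forall x y z, mul (mul x y) z = mul x (mul y z)) /\
  (forall x, join_pres (mul x)) /\ (forall y, join_pres (fun x => mul x y)) /\
  (forall a x y, mul (lact a x) y = lact a (mul x y)) /\
  (forall a x y, mul (ract x a) y = mul x (lact a y)) /\
  (forall a x y, ract (mul x y) a = mul x (ract y a)).

Variable inv : M -> M.

Definition is_involutive_AA_quantale : Prop :=
  is_AA_quantale /\ join_pres inv /\
  (forall x, inv (inv x) = x) /\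
  (forall x y, inv (mul x y) = mul (inv y) (inv x)) /\
  (forall a b x, inv (lact a (ract x b)) = lact b (ract (inv x) a)).

Definition is_support (s : M -> A) : Prop :=
  join_pres s /\ s top = top /\
  (forall x y, le (lact (s x) y) (mul (mul x (inv x)) y)) /\
  (forall x, lact (s x) x = x).

Definition is_equivariant (s : M -> A) : Prop :=
  forall a x, s (lact a x) = meet a (s x).

Definition is_based_quantal_frame : Prop :=
  is_frame A /\ is_involutive_AA_quantale /\ is_frame M /\
  (forall a x y, meet (lact a x) y = lact a (meet x y)) /\
  (forall x a y, meet (ract x a) y = ract (meet x y) a).

Arguments frame_hom {L M}.
Definition is_reflexive (u : M -> A) : Prop :=
  frame_hom u /\ forall a, u (lact a top) = a /\ u (ract top a) = a.

Definition inverse_law (u : M -> A) : Prop :=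
  forall a : M, lact (u a) top =
    sup (fun z => exists x y, le (mul x (inv y)) a /\ z = meet x y).
End Based.

Section IQF.
Variables (Q : suplat) (mul : Q -> Q -> Q) (inv : Q -> Q) (e : Q).

Definition is_unit : Prop := forall x, mul e x = x /\ mul x e = x.

Definition is_unital_involutive_quantale : Prop :=
  (forall x y z, mul (mul x y) z = mul x (mul y z)) /\
  (forall x, join_pres (mul x)) /\ (forall y, join_pres (fun x => mul x y)) /\
  is_unit /\
  join_pres inv /\ (forall x, inv (inv x) = x) /\
  (forall x y, inv (mul x y) = mul (inv y) (inv x)).

Definition is_stable_unital_support (s : Q -> Q) : Prop :=
  join_pres s /\
  (forall x, le (s x) e) /\ (forall x, le (s x) (mul x (inv x))) /\
  (forall x, le x (mul (s x) x)) /\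
  (forall x y, s (mul x y) = s (mul x (s y))).

Definition is_inverse_quantal_frame : Prop :=
  is_unital_involutive_quantale /\ is_frame Q /\
  (exists s, is_stable_unital_support s) /\
  sup (fun s => le (join (mul s (inv s)) (mul (inv s) s)) e) = top.
End IQF.

Section Down.
Variables (Q : suplat) (e : Q).
Definition down_car := {x : Q | le x e}.
Definition down_le (x y : down_car) : Prop := le (proj1_sig x) (proj1_sig y).
Definition down_img (S : down_car -> Prop) : Q -> Prop :=
  fun x => exists a, S a /\ x = proj1_sig a.
Lemma down_sup_proof (S : down_car -> Prop) : le (sup (down_img S)) e.
Proof. apply sup_least. intros x [a [_ ->]]. exact (proj2_sig a). Qed.
Definition down_sup (S : down_car -> Prop) : down_car :=
  exist _ (sup (down_img S)) (down_sup_proof S).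

Lemma down_le_refl x : down_le x x. Proof. apply le_refl. Qed.
Lemma down_le_trans x y z : down_le x y -> down_le y z -> down_le x z.
Proof. apply le_trans. Qed.
Lemma down_le_anti x y : down_le x y -> down_le y x -> x = y.
Proof.
  destruct x as [x hx], y as [y hy]; unfold down_le; simpl; intros h1 h2.
  pose proof (le_anti h1 h2) as E; subst y. f_equal. apply proof_irrelevance.
Qed.
Lemma down_sup_ub S x : S x -> down_le x (down_sup S).
Proof. intro h. apply sup_ub. exists x. split; auto. Qed.
Lemma down_sup_least S y : (forall x, S x -> down_le x y) -> down_le (down_sup S) y.
Proof. intro h. apply sup_least. intros x [a [Ha ->]]. apply h, Ha. Qed.

Definition downset : suplat :=
  @SupLat down_car down_le down_sup down_le_refl down_le_trans down_le_anti down_sup_ub down_sup_least.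

Definition meet_e (q : Q) : downset := exist _ (meet q e) (@meet_lb_r Q q e).
End Down.

Arguments is_bimodule {A M}.
Arguments is_AA_quantale {A M}.
Arguments is_involutive_AA_quantale {A M}.
Arguments is_support {A M}.
Arguments is_equivariant {A M}.
Arguments is_based_quantal_frame {A M}.
Arguments is_reflexive {A M}.
Arguments inverse_law {A M}.
Arguments is_unit {Q}.
Arguments is_unital_involutive_quantale {Q}.
Arguments is_stable_unital_support {Q}.
Arguments is_inverse_quantal_frame {Q}.
Arguments downset {Q}.
Arguments meet_e {Q}.

(* Main.v *)
Require Import Defs.
From Stdlib Require Import Setoid.
Set Implicit Arguments.

Section Lat.
Context {L : suplat}.
Implicit Types x y z : L.

Lemma le_top x : le x top.
Proof. apply sup_ub. exact I. Qed.

Lemma meet_lb_l x y : le (meet x y) x.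
Proof. apply sup_least. intros z [H _]. exact H. Qed.

Lemma meet_glb x y z : le z x -> le z y -> le z (meet x y).
Proof. intros. apply sup_ub. auto. Qed.

Lemma meet_comm x y : meet x y = meet y x.
Proof.
  apply le_anti; apply meet_glb; (apply meet_lb_l || apply meet_lb_r).
Qed.

Lemma meet_eq_l x y : le x y -> meet x y = x.
Proof. intro h. apply le_anti. apply meet_lb_l. apply meet_glb; auto. apply le_refl. Qed.

Lemma meet_eq_r x y : le y x -> meet x y = y.
Proof. intro h. rewrite meet_comm. apply meet_eq_l; auto. Qed.

Lemma meet_top_l x : meet top x = x.
Proof. apply meet_eq_r. apply le_top. Qed.

Lemma meet_mono x y x' y' : le x x' -> le y y' -> le (meet x y) (meet x' y').
Proof.
  intros. apply meet_glb.
  eapply le_trans. apply meet_lb_l. auto.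
  eapply le_trans. apply meet_lb_r. auto.
Qed.

Lemma meet_assoc x y z : meet (meet x y) z = meet x (meet y z).
Proof.
  apply le_anti; repeat apply meet_glb.
  - eapply le_trans; apply meet_lb_l.
  - eapply le_trans. apply meet_lb_l. apply meet_lb_r.
  - apply meet_lb_r.
  - apply meet_lb_l.
  - eapply le_trans. apply meet_lb_r. apply meet_lb_l.
  - eapply le_trans; apply meet_lb_r.
Qed.

Lemma meet_idem x : meet x x = x.
Proof. apply meet_eq_l. apply le_refl. Qed.

Lemma join_ub_l x y : le x (join x y).
Proof. apply sup_ub. auto. Qed.
Lemma join_ub_r x y : le y (join x y).
Proof. apply sup_ub. auto. Qed.
Lemma join_least x y z : le x z -> le y z -> le (join x y) z.
Proof. intros. apply sup_least. intros w [->| ->]; auto. Qed.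

Lemma sup_mono (S T : L -> Prop) :
  (forall x, S x -> exists y, T y /\ le x y) -> le (sup S) (sup T).
Proof.
  intro h. apply sup_least. intros x hx. destruct (h x hx) as [y [hy hxy]].
  eapply le_trans. exact hxy. apply sup_ub; auto.
Qed.

Lemma sup_ext (S T : L -> Prop) : (forall x, S x <-> T x) -> sup S = sup T.
Proof.
  intro h. apply le_anti; apply sup_mono; intros x hx; exists x; split;
  try apply le_refl; apply h; auto.
Qed.

Lemma frame_r (F : is_frame L) (S : L -> Prop) x :
  meet (sup S) x = sup (fun y => exists s, S s /\ y = meet s x).
Proof.
  rewrite meet_comm, F. apply sup_ext. intro y; split; intros [s [h1 h2]];
  exists s; split; auto; rewrite h2; apply meet_comm.
Qed.
End Lat.

Lemma jp_mono (L M : suplat) (f : L -> M) : join_pres f ->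
  forall x y, le x y -> le (f x) (f y).
Proof.
  intros h x y hxy.
  assert (E : join x y = y).
  { apply le_anti. apply join_least; auto. apply le_refl. apply join_ub_r. }
  rewrite <- E. unfold join. rewrite h. apply sup_ub. exists x. auto.
Qed.
Lemma lr {L : suplat} (x : L) : le x x.
Proof. apply le_refl. Qed.

Lemma dir1 (A Q : suplat) (lact : A -> Q -> Q) (ract : Q -> A -> Q)
     (mul : Q -> Q -> Q) (inv : Q -> Q) (s : Q -> A) (u : Q -> A) (e : Q) :
     is_based_quantal_frame lact ract mul inv ->
     is_support lact mul inv s -> is_equivariant lact s ->
     is_reflexive lact ract u ->
     is_unit mul e ->
     inverse_law lact mul inv u ->
     is_inverse_quantal_frame mul inv e.
Proof.
  intros [HfA [[[[Hla [Hla' [Hra [Hra' [Hl1 [Hlm [Hr1 [Hrm Hlr]]]]]]]]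
             [Hass [Hjx [Hjy [Hmla [Hmra Hmr]]]]]] [Hinvjp [Hii [Himul Hiact]]]]
             [HfQ [Hml Hmr']]]].
  intros [Hsjp [Hstop [Hsle Hsx]]] Heq [[Hujp [Hutop Humeet]] Hurefl] Hu Hil.
  assert (mulmono : forall x y x' y', le x x' -> le y y' -> le (mul x y) (mul x' y')).
  { intros. eapply le_trans. apply (jp_mono (Hjy y)); eauto. apply (jp_mono (Hjx x')); auto. }
  assert (smono := jp_mono Hsjp).
  assert (invmono := jp_mono Hinvjp).
  assert (lmono : forall a b x y, le a b -> le x y -> le (lact a x) (lact b y)).
  { intros. eapply le_trans. apply (jp_mono (Hla' x)); eauto. apply (jp_mono (Hla b)); auto. }
  assert (He : inv e = e).
  { assert (E : inv e = mul (inv e) e) by (symmetry; apply Hu).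
    assert (E2 : inv (inv e) = inv e).
    { rewrite E at 1. rewrite Himul, Hii. symmetry. exact E. }
    rewrite Hii in E2. symmetry; exact E2. }
  assert (Hinvtop : inv top = top).
  { apply le_anti. apply le_top. rewrite <- (Hii top) at 1. apply invmono, le_top. }
  split; [|split; [|split]].
  - repeat split; auto; apply Hu.
  - exact HfQ.
  - exists (fun x => lact (s x) e).
    assert (smul : forall z y, le (s (mul z y)) (s z)).
    { intros z y. eapply le_trans. apply smono. apply (mulmono z y z top (lr _) (le_top y)).
      assert (E : mul z top = lact (s z) (mul z top)).
      { rewrite <- Hmla, Hsx. reflexivity. }
      rewrite E, Heq. apply meet_lb_l. }
    split; [|split; [|split; [|split]]].
    + intros S. rewrite Hsjp. rewrite (Hla' e). apply sup_ext. intro y; split.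
      * intros [a [[x [hx ->]] ->]]. eauto.
      * intros [x [hx ->]]. exists (s x). eauto.
    + intro x. rewrite <- (Hl1 e) at 2. apply lmono. apply le_top. apply le_refl.
    + intro x. eapply le_trans. apply Hsle. rewrite (proj2 (Hu _)). apply le_refl.
    + intro x. rewrite Hmla, (proj1 (Hu x)), Hsx. apply le_refl.
    + intros x y. f_equal.
      assert (E : mul x (lact (s y) e) = ract x (s y)).
      { rewrite <- Hmra. apply Hu. }
      rewrite E. apply le_anti.
      * rewrite <- (Hsx y) at 1. rewrite <- Hmra. apply smul.
      * set (c := s (mul x y)). set (w := ract x (s y)).
        assert (hw : le w (lact c top)).
        { unfold w. rewrite <- E. eapply le_trans.
          apply (mulmono x _ x _ (lr _) (Hsle y e)).
          rewrite (proj2 (Hu _)), <- Hass. unfold c. rewrite <- (Hsx (mul x y)) at 1.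
          rewrite Hmla. apply lmono. apply le_refl. apply le_top. }
        assert (E2 : w = lact c w).
        { rewrite <- (meet_eq_r _ _ hw) at 1. rewrite Hml, meet_top_l. reflexivity. }
        rewrite E2, Heq. apply meet_lb_l.
  -
    set (P := fun q => le (join (mul q (inv q)) (mul (inv q) q)) e).
    set (T := fun w => le (mul w (inv w)) e).
    assert (Hb : forall x, lact (u e) x = x).
    { assert (h1 : le e (lact (u e) top)).
      { rewrite Hil. apply sup_ub. exists e, e. rewrite He, (proj1 (Hu e)), meet_idem.
        split. apply le_refl. reflexivity. }
      assert (h2 : lact (u e) e = e).
      { transitivity (meet (lact (u e) top) e).
        rewrite Hml, meet_top_l; reflexivity. apply meet_eq_r; exact h1. }
      intro x. rewrite <- (proj1 (Hu x)) at 1. rewrite <- Hmla, h2. apply Hu. }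
    assert (Hue : u e = top).
    { rewrite <- (proj1 (Hurefl (u e))), Hb. exact Hutop. }
    assert (HT : sup T = top).
    { apply le_anti. apply le_top.
      rewrite <- (Hl1 top) at 1. rewrite <- Hue, Hil. apply sup_mono.
      intros z [x [y [hxy ->]]]. exists (meet x y). split; [|apply le_refl].
      unfold T. eapply le_trans; [|exact hxy]. apply mulmono. apply meet_lb_l.
      apply invmono. apply meet_lb_r. }
    assert (HTP : forall z, T z -> le (inv z) (sup P)).
    { intros z hz. rewrite <- (meet_eq_l _ _ (le_top (inv z))), <- HT, HfQ.
      apply sup_least. intros t [w [hw ->]]. apply sup_ub. unfold P.
      apply join_least.
      - eapply le_trans; [|exact hw]. apply mulmono. apply meet_lb_r.
        apply invmono, meet_lb_r.
      - eapply le_trans; [|exact hz]. apply mulmono.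
        eapply le_trans; [apply invmono, meet_lb_l | rewrite Hii; apply lr].
        apply meet_lb_l. }
    apply le_anti; [apply le_top|].
    rewrite <- Hinvtop, <- HT, Hinvjp. apply sup_least. intros y [z [hz ->]]. auto.
Qed.

Section Down.
Context {Q : suplat} (e : Q).

Lemma down_eq (a b : downset e) : proj1_sig a = proj1_sig b -> a = b.
Proof.
  intro h. apply (@down_le_anti Q e); unfold down_le; rewrite h; apply lr.
Qed.

Lemma DT : proj1_sig (@top (downset e)) = e.
Proof.
  simpl. apply le_anti.
  - apply sup_least. intros x [a [_ ->]]. exact (proj2_sig a).
  - apply sup_ub. exists (exist (fun x => le x e) e (lr e)). split; auto.
Qed.

Lemma DM (a b : downset e) : proj1_sig (meet a b) = meet (proj1_sig a) (proj1_sig b).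
Proof.
  simpl. apply le_anti.
  - apply sup_least. intros x [c [[h1 h2] ->]]. apply meet_glb; auto.
  - apply sup_ub.
    assert (h : le (meet (proj1_sig a) (proj1_sig b)) e).
    { eapply le_trans. apply meet_lb_l. exact (proj2_sig a). }
    exists (exist (fun x => le x e) _ h). split; auto. split; [apply meet_lb_l | apply meet_lb_r].
Qed.
End Down.

Section D2.
Context (Q : suplat) (mul : Q -> Q -> Q) (inv : Q -> Q) (e : Q) (sg : Q -> Q).
Hypothesis Hass : forall x y z, mul (mul x y) z = mul x (mul y z).
Hypothesis Hjx : forall x, join_pres (mul x).
Hypothesis Hjy : forall y, join_pres (fun x => mul x y).
Hypothesis Hu : is_unit mul e.
Hypothesis Hinvjp : join_pres inv.
Hypothesis Hii : forall x, inv (inv x) = x.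
Hypothesis Himul : forall x y, inv (mul x y) = mul (inv y) (inv x).
Hypothesis HfQ : is_frame Q.
Hypothesis Hsgjp : join_pres sg.
Hypothesis Hsge : forall x, le (sg x) e.
Hypothesis Hsgxx : forall x, le (sg x) (mul x (inv x)).
Hypothesis Hsgx : forall x, le x (mul (sg x) x).
Hypothesis Hstab : forall x y, sg (mul x y) = sg (mul x (sg y)).
Hypothesis Hcov : sup (fun s => le (join (mul s (inv s)) (mul (inv s) s)) e) = top.

Lemma mulmono x y x' y' : le x x' -> le y y' -> le (mul x y) (mul x' y').
Proof. intros. eapply le_trans. apply (jp_mono (Hjy y)); eauto. apply (jp_mono (Hjx x')); auto. Qed.
Lemma invmono x y : le x y -> le (inv x) (inv y).
Proof. apply (jp_mono Hinvjp). Qed.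
Lemma sgmono x y : le x y -> le (sg x) (sg y).
Proof. apply (jp_mono Hsgjp). Qed.

Lemma mul_e_l x : mul e x = x. Proof. apply Hu. Qed.
Lemma mul_e_r x : mul x e = x. Proof. apply Hu. Qed.

Lemma inv_e : inv e = e.
Proof.
  assert (E : inv e = mul (inv e) e) by (symmetry; apply Hu).
  assert (E2 : inv (inv e) = inv e).
  { rewrite E at 1. rewrite Himul, Hii. symmetry. exact E. }
  rewrite Hii in E2. symmetry; exact E2.
Qed.

Lemma inv_top : inv top = top.
Proof. apply le_anti. apply le_top. rewrite <- (Hii top) at 1. apply invmono, le_top. Qed.

Lemma inv_meet x y : inv (meet x y) = meet (inv x) (inv y).
Proof.
  apply le_anti.
  - apply meet_glb; apply invmono; [apply meet_lb_l | apply meet_lb_r].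
  - rewrite <- (Hii (meet (inv x) (inv y))). apply invmono.
    apply meet_glb.
    + rewrite <- (Hii x) at 2. apply invmono, meet_lb_l.
    + rewrite <- (Hii y) at 2. apply invmono, meet_lb_r.
Qed.

Lemma L1 b : le b e -> le (inv b) e.
Proof. intro h. rewrite <- inv_e. apply invmono, h. Qed.

Lemma L11 x : mul (sg x) x = x.
Proof.
  apply le_anti. rewrite <- (mul_e_l x) at 3. apply mulmono. apply Hsge. apply lr.
  apply Hsgx.
Qed.

Lemma L3 b : le b e -> sg b = b.
Proof.
  intro h. apply le_anti.
  - eapply le_trans. apply Hsgxx. rewrite <- (mul_e_r b) at 3. apply mulmono. apply lr. apply L1, h.
  - rewrite <- (L11 b) at 1. rewrite <- (mul_e_r (sg b)) at 2. apply mulmono. apply lr. exact h.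
Qed.

Lemma L4 b : le b e -> mul b (inv b) = b.
Proof.
  intro h. apply le_anti.
  - rewrite <- (mul_e_r b) at 3. apply mulmono. apply lr. apply L1, h.
  - rewrite <- (L3 _ h) at 1. apply Hsgxx.
Qed.

Lemma L5 b : le b e -> inv b = b.
Proof. intro h. rewrite <- (L4 _ h) at 1. rewrite Himul, Hii. apply L4, h. Qed.

Lemma L7 a b : le a e -> le b e -> mul a b = meet a b.
Proof.
  intros ha hb. apply le_anti.
  - apply meet_glb.
    + rewrite <- (mul_e_r a) at 2. apply mulmono; auto. apply lr.
    + rewrite <- (mul_e_l b) at 2. apply mulmono; auto. apply lr.
  - assert (hc : le (meet a b) e) by (eapply le_trans; [apply meet_lb_l | exact ha]).
    rewrite <- (L4 _ hc) at 1. rewrite (L5 _ hc). apply mulmono; [apply meet_lb_l | apply meet_lb_r].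
Qed.

Lemma sg_top : sg top = e.
Proof. apply le_anti. apply Hsge. rewrite <- (L3 _ (lr e)) at 1. apply sgmono, le_top. Qed.

Lemma L9 x : sg (mul x top) = sg x.
Proof. rewrite Hstab, sg_top, mul_e_r. reflexivity. Qed.

Lemma L10 x : meet (mul x top) e = sg x.
Proof.
  apply le_anti.
  - assert (hc : le (meet (mul x top) e) e) by apply meet_lb_r.
    rewrite <- (L3 _ hc). rewrite <- (L9 x). apply sgmono, meet_lb_l.
  - apply meet_glb; [|apply Hsge]. eapply le_trans. apply Hsgxx.
    apply mulmono. apply lr. apply le_top.
Qed.

Lemma L12 b x : le b e -> mul b x = meet (mul b top) x.
Proof.
  intro h. apply le_anti.
  - apply meet_glb. apply mulmono. apply lr. apply le_top.
    rewrite <- (mul_e_l x) at 2. apply mulmono; auto. apply lr.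
  - set (y := meet (mul b top) x).
    rewrite <- (L11 y) at 1. apply mulmono; [|apply meet_lb_r].
    rewrite <- (L3 _ h), <- (L9 b). apply sgmono, meet_lb_l.
Qed.

Lemma L13 b x : le b e -> mul x b = meet x (mul top b).
Proof.
  intro h. rewrite <- (Hii (mul x b)), Himul, (L5 _ h), (L12 _ _ h), inv_meet, Hii, Himul, inv_top, (L5 _ h).
  apply meet_comm.
Qed.

Lemma top_top : mul top top = top.
Proof. apply le_anti. apply le_top. rewrite <- (mul_e_l top) at 1. apply mulmono. apply le_top. apply lr. Qed.


Lemma meet_e_proj (q : Q) : proj1_sig (meet_e e q) = meet q e.
Proof. reflexivity. Qed.

Lemma dir2_core :
     let A := downset e in
     let lact := fun (a : A) (x : Q) => mul (proj1_sig a) x in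
     let ract := fun (x : Q) (a : A) => mul x (proj1_sig a) in
     let s := fun q : Q => meet_e e (mul q top) in
     let u := fun q : Q => meet_e e q in
     is_based_quantal_frame lact ract mul inv /\
     is_support lact mul inv s /\ is_equivariant lact s /\
     is_reflexive lact ract u /\
     inverse_law lact mul inv u.
Proof.
  cbv zeta.
  assert (P2 : forall a : downset e, le (proj1_sig a) e) by (intro a; exact (proj2_sig a)).
  assert (Hs : forall q, proj1_sig (meet_e e (mul q top)) = sg q) by (intro q; apply L10).
  split; [|split; [|split; [|split]]].
  -
    split; [|split; [|split; [|split]]].
    + intros x S. apply down_eq. rewrite DM. simpl. rewrite HfQ. apply sup_ext.
      intro y; split.
      * intros [z [[a [ha ->]] ->]]. exists (meet x a). split; [eauto|]. symmetry; exact (DM x a).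
      * intros [c [[a [ha ->]] ->]]. exists (proj1_sig a). split; [exists a; auto|]. exact (DM x a).
    + split; [|split; [|split; [|split]]].
      * split.
        { split; [|split; [|split; [|split; [|split; [|split; [|split; [|split]]]]]]].
        -- intro a. apply Hjx.
        -- intros m S. simpl. rewrite Hjy. apply sup_ext. intro y; split.
           ++ intros [z [[a [ha ->]] ->]]. exists a; auto.
           ++ intros [a [ha ->]]. exists (proj1_sig a); split; [exists a; auto | reflexivity].
        -- intro a. apply Hjy.
        -- intros m S. simpl. rewrite Hjx. apply sup_ext. intro y; split.
           ++ intros [z [[a [ha ->]] ->]]. exists a; auto.
           ++ intros [a [ha ->]]. exists (proj1_sig a); split; [exists a; auto | reflexivity].
        -- intro m. rewrite DT. apply mul_e_l.
        -- intros a b m. rewrite DM, <- (L7 _ _ (P2 a) (P2 b)). apply Hass.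
        -- intro m. rewrite DT. apply mul_e_r.
        -- intros a b m. rewrite DM, <- (L7 _ _ (P2 a) (P2 b)). symmetry. apply Hass.
        -- intros a b m. apply Hass. }
        split; [|split; [|split; [|split; [|split]]]]; auto; intros; apply Hass.
      * exact Hinvjp.
      * exact Hii.
      * exact Himul.
      * intros a b x. rewrite !Himul, (L5 _ (P2 a)), (L5 _ (P2 b)). apply Hass.
    + exact HfQ.
    + intros a x y. rewrite (L12 _ _ (P2 a)), (L12 _ (meet x y) (P2 a)). apply meet_assoc.
    + intros x a y. rewrite (L13 _ _ (P2 a)), (L13 _ (meet x y) (P2 a)).
      rewrite !meet_assoc. f_equal. apply meet_comm.
  -
    split; [|split; [|split]].
    + intro S. apply down_eq. rewrite Hs, Hsgjp. simpl. apply sup_ext. intro y; split.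
      * intros [x [hx ->]]. exists (meet_e e (mul x top)). split; [exists x; auto | rewrite Hs; reflexivity].
      * intros [c [[x [hx ->]] ->]]. rewrite Hs. eauto.
    + apply down_eq. rewrite Hs, DT. apply sg_top.
    + intros x y. simpl. rewrite L10. apply mulmono. apply Hsgxx. apply lr.
    + intro x. simpl. rewrite L10. apply L11.
  -
    intros a x. apply down_eq. rewrite DM, !Hs. simpl.
    assert (h : le (meet (proj1_sig a) (sg x)) e) by (eapply le_trans; [apply meet_lb_r| apply Hsge]).
    rewrite Hstab, (L7 _ _ (P2 a) (Hsge x)). apply L3, h.
  -
    split; [split; [|split]|].
    + intro S. apply down_eq. simpl. rewrite frame_r by exact HfQ. apply sup_ext. intro y; split.
      * intros [x [hx ->]]. exists (meet_e e x). split; eauto.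
      * intros [c [[x [hx ->]] ->]]. eauto.
    + apply down_eq. rewrite DT. simpl. apply meet_top_l.
    + intros x y. apply down_eq. rewrite DM. simpl.
      apply le_anti.
      * apply meet_glb; apply meet_glb; try apply meet_lb_r.
        eapply le_trans; apply meet_lb_l.
        eapply le_trans; [apply meet_lb_l | apply meet_lb_r].
      * apply meet_glb; [apply meet_glb|].
        eapply le_trans; apply meet_lb_l.
        eapply le_trans; [apply meet_lb_r | apply meet_lb_l].
        eapply le_trans; [apply meet_lb_l | apply meet_lb_r].
    + intro a. split; apply down_eq; simpl.
      * rewrite L10. apply L3, P2.
      * rewrite meet_comm, <- (L13 _ _ (P2 a)). apply mul_e_l.
  -
    intro a. simpl. apply le_anti.
    + assert (hae : le (meet a e) e) by apply meet_lb_r.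
      rewrite <- Hcov, Hjx. apply sup_least. intros t [p [hp ->]].
      apply sup_ub. exists (mul (meet a e) p), (mul (meet a e) p). rewrite meet_idem.
      split; [|reflexivity].
      rewrite Himul, (L5 _ hae), !Hass. rewrite <- (Hass p).
      eapply le_trans. apply mulmono. apply lr. apply mulmono.
      eapply le_trans; [apply join_ub_l | exact hp]. apply lr.
      rewrite mul_e_l, (L7 _ _ hae hae), meet_idem. apply meet_lb_l.
    + apply sup_least. intros z [x [y [hxy ->]]].
      set (w := meet x y).
      rewrite <- (L11 w) at 1. apply mulmono; [|apply le_top].
      apply meet_glb; [|apply Hsge].
      eapply le_trans. apply Hsgxx. eapply le_trans; [|exact hxy].
      apply mulmono. apply meet_lb_l. apply invmono, meet_lb_r.
Qed.

End D2.


Theorem theorem5p10 :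
  (* unital equivariantly supported reflexive based quantal frames with the
     inverse law are inverse quantal frames *)
  (forall (A Q : suplat) (lact : A -> Q -> Q) (ract : Q -> A -> Q)
     (mul : Q -> Q -> Q) (inv : Q -> Q) (s : Q -> A) (u : Q -> A) (e : Q),
     is_based_quantal_frame lact ract mul inv ->
     is_support lact mul inv s -> is_equivariant lact s ->
     is_reflexive lact ract u ->
     is_unit mul e ->
     inverse_law lact mul inv u ->
     is_inverse_quantal_frame mul inv e) /\
  (* conversely, every inverse quantal frame is such, over A = ↓e *)
  (forall (Q : suplat) (mul : Q -> Q -> Q) (inv : Q -> Q) (e : Q),
     is_inverse_quantal_frame mul inv e ->
     let A := downset e in
     let lact := fun (a : A) (x : Q) => mul (proj1_sig a) x in
     let ract := fun (x : Q) (a : A) => mul x (proj1_sig a) in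
     let s := fun q : Q => meet_e e (mul q top) in
     let u := fun q : Q => meet_e e q in
     is_based_quantal_frame lact ract mul inv /\
     is_support lact mul inv s /\ is_equivariant lact s /\
     is_reflexive lact ract u /\
     inverse_law lact mul inv u).
Proof.
  split.
  - exact dir1.
  - intros Q mul inv e [[Hass [Hjx [Hjy [Hu [Hinvjp [Hii Himul]]]]]]
      [HfQ [[sg [Hsgjp [Hsge [Hsgxx [Hsgx Hstab]]]]] Hcov]]].
    eapply dir2_core; eassumption.
Qed.
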